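(* Let $q=2^f$ with $f\ge4$, let $q_0<q$ be a power of $2$ with $\gcd(q-1,q_0^2-1)=1$, and let $u\in\mathscr{U}_{q,q_0}$. (i) Let $A$ be the centralizer of $K'$ in $\mathrm{Aut}(\Gamma_u)$. Then $K\le A$ and $|A:K|\le2$; moreover, every element of $A\setminus K$ interchanges the sets $\Omega_u$ and $\Omega_{u+1}$. (ii) If $\alpha\in\mathrm{Aut}(\Gamma_u)$ is an involution which centralizes $H$, then $\alpha$ fixes every point of $\Omega_u\cup\Omega_{u+1}$.
   Context: For $a,c\in\mathbb{F}_q$ and $\lambda\in\mathbb{F}_q^*$ let $\Phi_{a,c}=\begin{bmatrix}1&0&0\\ a&1&0\\ c&a^{q_0}&1\end{bmatrix}$ and $\Psi_\lambda=\mathrm{diag}(1,\lambda,\lambda^{q_0+1})$. Let $K=\{\Phi_{a,c}\}$, $H=\{\Psi_\lambda\}$, $G=HK\le GL(3,\mathbb{F}_q)$, and $K'$ the commutator subgroup of $K$. For $v\in\mathbb{F}_q$ let $\Omega_v=\{\Phi_{a,va^{q_0+1}}: a\in\mathbb{F}_q^*\}$. $\Gamma_u=\mathrm{Cay}(K,\Omega_u\cup\Omega_{u+1})$ has vertex set $K$, $x,y$ adjacent iff $xy^{-1}\in\Omega_u\cup\Omega_{u+1}$. $G$ is identified with its permutation action on $K$ (elements of $K$ act by right multiplication, $\Psi\in H$ by conjugation $x\mapsto\Psi^{-1}x\Psi$), so $K$, $K'$, $H$ are regarded as subgroups of $\mathrm{Aut}(\Gamma_u)$. $\mathscr{U}_{q,q_0}$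 is the set of $u\in\mathbb{F}_q$ such that (U1) $u=(1+\eta^{q_0})/(\eta+\eta^{q_0})$ for some primitive element $\eta$ of $\mathbb{F}_q$, and (U2) $X^{q_0+1}+uX^{q_0}+(u+1)X+1$ has no roots in $\mathbb{F}_q$. *)

(* Defs.v *)
From HB Require Import structures.
From mathcomp Require Import all_boot all_order all_algebra all_fingroup all_field.
Import GRing.Theory.
Local Open Scope ring_scope.

Definition Phi (F : fieldType) (q0 : nat) (a c : F) : 'M[F]_3 :=
  \matrix_(i < 3, j < 3)
    nth 0 (nth [::] [:: [:: 1; 0; 0]; [:: a; 1; 0]; [:: c; a ^+ q0; 1]] i) j.

Definition Psi (F : fieldType) (q0 : nat) (l : F) : 'M[F]_3 :=
  diag_mx (\row_(i < 3) nth 0 [:: 1; l; l ^+ q0.+1] i).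

Definition Kset (F : finFieldType) (q0 : nat) : {set {'GL_3[F]}} :=
  [set g : {'GL_3[F]} | [exists a : F, exists c : F, GLval g == Phi F q0 a c]].

Definition Hset (F : finFieldType) (q0 : nat) : {set {'GL_3[F]}} :=
  [set g : {'GL_3[F]} | [exists l : F, (l != 0) && (GLval g == Psi F q0 l)]].

Definition Omega (F : finFieldType) (q0 : nat) (v : F) : {set {'GL_3[F]}} :=
  [set g : {'GL_3[F]} | [exists a : F, (a != 0) && (GLval g == Phi F q0 a (v * a ^+ q0.+1))]].

Notation Kvert F q0 := {x : {'GL_3[F]} | x \in Kset F q0}.

(* adjacency of Gamma_u = Cay(K, Omega_u \cup Omega_{u+1}) : x ~ y iff x y^-1 in S *)
Definition Gadj (F : finFieldType) (q0 : nat) (u : F) (x y : Kvert F q0) : bool :=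
  ((val x * (val y)^-1)%g \in Omega F q0 u :|: Omega F q0 (u + 1)).

Definition AutG (F : finFieldType) (q0 : nat) (u : F) : {set {perm Kvert F q0}} :=
  [set s : {perm Kvert F q0} | [forall x, forall y, Gadj F q0 u (s x) (s y) == Gadj F q0 u x y]].

(* a subset X of K viewed as permutations of K by right multiplication *)
Definition rmulPerm (F : finFieldType) (q0 : nat) (X : {set {'GL_3[F]}})
  : {set {perm Kvert F q0}} :=
  [set s : {perm Kvert F q0} | [exists k in X, [forall x, val (s x) == (val x * k)%g]]].

(* a subset Y of H viewed as permutations of K by conjugation x |-> Psi^-1 x Psi *)
Definition conjPerm (F : finFieldType) (q0 : nat) (Y : {set {'GL_3[F]}})
  : {set {perm Kvert F q0}} :=
  [set s : {perm Kvert F q0} | [exists h in Y, [forall x, val (s x) == (val x ^ h)%g]]].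

Definition OmegaV (F : finFieldType) (q0 : nat) (v : F) : {set Kvert F q0} :=
  [set x | val x \in Omega F q0 v].

Definition inU (F : finFieldType) (q0 : nat) (u : F) : Prop :=
  (exists eta : F, (#|F|.-1).-primitive_root eta /\
                   u = (1 + eta ^+ q0) / (eta + eta ^+ q0)) /\
  (forall x : F, ~~ root ('X^(q0.+1) + u *: 'X^q0 + (u + 1) *: 'X + 1) x).

(* Main.v *)
Require Import Defs.
From HB Require Import structures.
From mathcomp Require Import all_boot all_order all_algebra all_fingroup all_field.
From mathcomp Require Import ring.
Import GRing.Theory.
Set Implicit Arguments.
Unset Strict Implicit.
Local Open Scope ring_scope.

Section Mat.
Variables (F : finFieldType) (q0 : nat).
Hypothesis q0pos : (0 < q0)%N.
Hypothesis frob : forall x y : F, (x + y) ^+ q0 = x ^+ q0 + y ^+ q0.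
Local Notation V := (Kvert F q0).

Lemma frobN (a : F) : (- a) ^+ q0 = - a ^+ q0.
Proof.
have := frob a (- a); rewrite subrr expr0n gtn_eqF //= => /esym/eqP.
by rewrite addr_eq0 => /eqP ->; rewrite opprK.
Qed.

Lemma Phi_mul a b c d :
  Phi F q0 a c *m Phi F q0 b d = Phi F q0 (a + b) (c + d + a ^+ q0 * b).
Proof.
apply/matrixP => i j; rewrite !mxE !big_ord_recl !big_ord0 /= !mxE /=.
case: i => [[|[|[|i]]] Hi] //=; case: j => [[|[|[|j]]] Hj] //=;
  rewrite ?frob; ring.
Qed.

Lemma Phi_inj a b c d : Phi F q0 a c = Phi F q0 b d -> a = b /\ c = d.
Proof.
move=> E; have := congr1 (fun M : 'M_3 => M 1 0) E; have := congr1 (fun M : 'M_3 => M 2%:R 0) E.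
by rewrite !mxE /= => -> ->.
Qed.

Lemma Phi00 : Phi F q0 0 0 = 1%:M.
Proof.
apply/matrixP => i j; rewrite !mxE /=.
by case: i => [[|[|[|i]]] Hi] //=; case: j => [[|[|[|j]]] Hj] //=; rewrite expr0n gtn_eqF.
Qed.

Lemma Phi_inv a c : Phi F q0 a c *m Phi F q0 (- a) (- c + a ^+ q0 * a) = 1%:M.
Proof. by rewrite Phi_mul -Phi00; congr Phi; ring. Qed.

Lemma Phi_unit a c : Phi F q0 a c \in unitmx.
Proof. by case: (mulmx1_unit (Phi_inv a c)). Qed.

Definition mkK a c : {'GL_3[F]} := Sub (Phi F q0 a c) (Phi_unit a c).

Lemma mkKE a c : GLval (mkK a c) = Phi F q0 a c.
Proof. by []. Qed.

Lemma GLinvE (Y : {'GL_3[F]}) b d : GLval Y = Phi F q0 b d ->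
  GLval (Y^-1)%g = Phi F q0 (- b) (- d + b ^+ q0 * b).
Proof.
move=> E; rewrite GL_VxE E -[RHS](mulKmx (Phi_unit b d)) Phi_inv.
by rewrite mulmx1.
Qed.

Lemma GLmulE (X Y : {'GL_3[F]}) a c b d : GLval X = Phi F q0 a c -> GLval Y = Phi F q0 b d ->
  GLval (X * Y)%g = Phi F q0 (a + b) (c + d + a ^+ q0 * b).
Proof. by move=> EX EY; rewrite GL_MxE EX EY Phi_mul. Qed.

Lemma GL1E : GLval (1%g : {'GL_3[F]}) = Phi F q0 0 0.
Proof. by rewrite GL_1E Phi00. Qed.

Lemma commPhi (X Y : {'GL_3[F]}) a c b d : GLval X = Phi F q0 a c -> GLval Y = Phi F q0 b d ->
  GLval [~ X, Y]%g = Phi F q0 0 (a ^+ q0 * b - b ^+ q0 * a).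
Proof.
move=> EX EY; rewrite /commg /conjg !mulgA.
have E1 := GLmulE (GLinvE EX) (GLinvE EY).
have E2 := GLmulE E1 EX.
rewrite (GLmulE E2 EY).
rewrite !frob !frobN; congr Phi; ring.
Qed.

Definition Psi' (l : F) := Psi F q0 l.

Lemma Psi_mul l m : Psi F q0 l *m Psi F q0 m = Psi F q0 (l * m).
Proof.
apply/matrixP => i j; rewrite !mxE !big_ord_recl !big_ord0 /= !mxE /=.
case: i => [[|[|[|i]]] Hi] //=; case: j => [[|[|[|j]]] Hj] //=; rewrite ?mulr1n ?mulr0n ?exprMn; ring.
Qed.

Lemma Psi1 : Psi F q0 1 = 1%:M.
Proof.
apply/matrixP => i j; rewrite !mxE /=.
by case: i => [[|[|[|i]]] Hi] //=; case: j => [[|[|[|j]]] Hj] //=; rewrite expr1n.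
Qed.

Lemma Psi_unit l : l != 0 -> Psi F q0 l \in unitmx.
Proof.
move=> l0; have E : Psi F q0 l *m Psi F q0 l^-1 = 1%:M by rewrite Psi_mul divff // Psi1.
by case: (mulmx1_unit E).
Qed.

Lemma Psi_conj l a c : l != 0 ->
  Psi F q0 l *m Phi F q0 (a / l) (c / l ^+ q0.+1) = Phi F q0 a c *m Psi F q0 l.
Proof.
move=> l0; have lq : l ^+ q0 != 0 by rewrite expf_neq0.
apply/matrixP => i j; rewrite !mxE !big_ord_recl !big_ord0 /= !mxE /=.
case: i => [[|[|[|i]]] Hi] //=; case: j => [[|[|[|j]]] Hj] //=; rewrite ?mulr1n ?mulr0n ?exprS ?expr_div_n; field; rewrite ?lq ?l0 //.
Qed.

Variable u : F.


Lemma mkK_in a c : mkK a c \in Kset F q0.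
Proof. by rewrite inE; apply/existsP; exists a; apply/existsP; exists c; rewrite mkKE. Qed.

Definition vK a c : V := exist _ (mkK a c) (mkK_in a c).

Lemma Kcoord (x : V) : exists a c, GLval (val x) = Phi F q0 a c.
Proof.
by have := valP x; rewrite inE => /existsP [a /existsP [c /eqP E]]; exists a, c.
Qed.

Lemma vK_eq (x : V) a c : GLval (val x) = Phi F q0 a c -> x = vK a c.
Proof. by move=> E; apply: val_inj; apply: val_inj; rewrite /= E. Qed.

Lemma inOmega (Z : {'GL_3[F]}) v a c : GLval Z = Phi F q0 a c ->
  (Z \in Omega F q0 v) = (a != 0) && (c == v * a ^+ q0.+1).
Proof.
move=> E; rewrite inE; apply/existsP/andP => [[a' /andP [a0 /eqP E']]|[a0 /eqP Ec]].
  by rewrite E in E'; case: (Phi_inj E') => -> ->.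
by exists a; rewrite a0 E Ec /= eqxx.
Qed.

Definition adjF a c b d :=
  (a - b != 0) && ((c - d + b ^+ q0 * b - a ^+ q0 * b == u * (a - b) ^+ q0.+1) ||
                   (c - d + b ^+ q0 * b - a ^+ q0 * b == (u + 1) * (a - b) ^+ q0.+1)).

Lemma Gadj_E (x y : V) a c b d : GLval (val x) = Phi F q0 a c -> GLval (val y) = Phi F q0 b d ->
  Gadj F q0 u x y = adjF a c b d.
Proof.
move=> Ex Ey; rewrite /Gadj.
have E : GLval (val x * (val y)^-1)%g = Phi F q0 (a - b) (c - d + b ^+ q0 * b - a ^+ q0 * b).
  by rewrite (GLmulE Ex (GLinvE Ey)); congr Phi; ring.
by rewrite in_setU !(inOmega _ E) /adjF -andb_orr.
Qed.

Lemma Gadj_vK a c b d : Gadj F q0 u (vK a c) (vK b d) = adjF a c b d.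
Proof. exact: Gadj_E. Qed.


Lemma Kmul_in (x k : {'GL_3[F]}) : x \in Kset F q0 -> k \in Kset F q0 -> (x * k)%g \in Kset F q0.
Proof.
rewrite !inE => /existsP [a /existsP [c /eqP Ex]] /existsP [b /existsP [d /eqP Ek]].
by apply/existsP; exists (a + b); apply/existsP; exists (c + d + a ^+ q0 * b); rewrite (GLmulE Ex Ek).
Qed.

Lemma Kinv_in (k : {'GL_3[F]}) : k \in Kset F q0 -> (k^-1)%g \in Kset F q0.
Proof.
rewrite !inE => /existsP [b /existsP [d /eqP Ek]].
by apply/existsP; exists (- b); apply/existsP; exists (- d + b ^+ q0 * b); rewrite (GLinvE Ek).
Qed.

Definition rmulf (k : {'GL_3[F]}) (Hk : k \in Kset F q0) (x : V) : V :=
  exist _ (val x * k)%g (Kmul_in (valP x) Hk).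

Lemma rmulf_inj k (Hk : k \in Kset F q0) : injective (rmulf Hk).
Proof. by move=> x y /(congr1 val) /= /mulIg E; apply: val_inj. Qed.

Definition rperm k (Hk : k \in Kset F q0) : {perm V} := perm (@rmulf_inj k Hk).

Lemma rpermE k (Hk : k \in Kset F q0) x : val (rperm Hk x) = (val x * k)%g.
Proof. by rewrite permE. Qed.

Lemma Gadj_rmul (k : {'GL_3[F]}) (x y : V) : 
  ((val x * k) * (val y * k)^-1 = val x * (val y)^-1)%g.
Proof. by rewrite invMg mulgA mulgK. Qed.

Lemma rperm_aut k (Hk : k \in Kset F q0) x y :
  Gadj F q0 u (rperm Hk x) (rperm Hk y) = Gadj F q0 u x y.
Proof. by rewrite /Gadj !rpermE Gadj_rmul. Qed.

Lemma GL_eq (X Y : {'GL_3[F]}) : GLval X = GLval Y -> X = Y.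
Proof. exact: val_inj. Qed.

Lemma vK00 : val (vK 0 0) = 1%g.
Proof. by apply: GL_eq; rewrite GL1E. Qed.

Definition mkH (l : F) (l0 : l != 0) : {'GL_3[F]} := Sub (Psi F q0 l) (Psi_unit l0).

Lemma mkH_in l (l0 : l != 0) : mkH l0 \in Hset F q0.
Proof. by rewrite inE; apply/existsP; exists l; rewrite l0 /= eqxx. Qed.

Lemma conjE l (l0 : l != 0) (X : {'GL_3[F]}) a c : GLval X = Phi F q0 a c ->
  GLval (X ^ mkH l0)%g = Phi F q0 (a / l) (c / l ^+ q0.+1).
Proof.
move=> E; rewrite /conjg GL_MxE GL_MxE GL_VxE E /=.
by rewrite -Psi_conj // mulKmx // Psi_unit.
Qed.

Lemma Kconj_in l (l0 : l != 0) (x : {'GL_3[F]}) : x \in Kset F q0 -> (x ^ mkH l0)%g \in Kset F q0.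
Proof.
rewrite !inE => /existsP [a /existsP [c /eqP Ex]].
by apply/existsP; exists (a / l); apply/existsP; exists (c / l ^+ q0.+1); rewrite (conjE l0 Ex).
Qed.

Definition conjf l (l0 : l != 0) (x : V) : V :=
  exist _ (val x ^ mkH l0)%g (Kconj_in l0 (valP x)).

Lemma conjf_inj l (l0 : l != 0) : injective (conjf l0).
Proof. by move=> x y /(congr1 val) /= /conjg_inj E; apply: val_inj. Qed.

Definition cperm l (l0 : l != 0) : {perm V} := perm (@conjf_inj l l0).

Lemma cpermE l (l0 : l != 0) (x : V) a c : GLval (val x) = Phi F q0 a c ->
  GLval (val (cperm l0 x)) = Phi F q0 (a / l) (c / l ^+ q0.+1).
Proof. by move=> E; rewrite permE; apply: conjE. Qed.

Lemma cperm_in l (l0 : l != 0) : cperm l0 \in conjPerm F q0 (Hset F q0).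
Proof.
rewrite inE; apply/existsP; exists (mkH l0); rewrite mkH_in /=.
by apply/forallP => x; rewrite permE.
Qed.

Lemma adjF0 a c z : adjF a c 0 z =
  (a != 0) && ((c - z == u * a ^+ q0.+1) || (c - z == (u + 1) * a ^+ q0.+1)).
Proof. by rewrite /adjF subr0 expr0n gtn_eqF // !mul0r mulr0 !subr0 addr0. Qed.

Hypothesis F2 : (2%:R : F) = 0.
Hypothesis inj1 : forall x y : F, x ^+ q0.+1 = y ^+ q0.+1 -> x = y.
Hypothesis inj2 : forall a b : F, a != 0 -> b != 0 -> a ^+ q0 * b = a * b ^+ q0 -> a = b.
Variable eta : F.
Hypothesis eta0 : eta != 0.
Hypothesis eta1 : eta != 1.

Lemma ch2 (X Y K P : F) : X - Y = K + 2%:R * P -> K = 0 -> X = Y.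
Proof. by move=> E K0; apply/eqP; rewrite -subr_eq0 E K0 F2 mul0r addr0. Qed.

Lemma ch2ne (X Y K P : F) : X - Y = K + 2%:R * P -> K != 0 -> X != Y.
Proof.
move=> E; apply: contra => /eqP XY.
have -> : K = X - Y - 2%:R * P by rewrite E; ring.
by rewrite F2 mul0r subr0 XY subrr.
Qed.

Lemma oppE (x : F) : - x = x.
Proof. by apply: (ch2 (K := (0 : F)) (P := - x)) => //; ring. Qed.

Lemma A_neq0 (a : F) : a != 0 -> a ^+ q0.+1 != 0.
Proof. by move=> a0; rewrite expf_neq0. Qed.

Lemma fix_all (t : {perm V}) :
  (forall x y, Gadj F q0 u (t x) (t y) = Gadj F q0 u x y) ->
  (forall z, t (vK 0 z) = vK 0 z) ->
  forall x, t x = x.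
Proof.
move=> Ht Hz.
have shape a c : a != 0 -> t (vK a c) = vK a c \/ t (vK a c) = vK a (c + a ^+ q0.+1).
  move=> a0; have [a' [c' E']] := Kcoord (t (vK a c)).
  have H z : adjF a' c' 0 z = adjF a c 0 z.
    rewrite -(Gadj_E (y := vK 0 z) E' (mkKE 0 z)) -Gadj_vK.
    by rewrite -{1}(Hz z) Ht.
  set A := a ^+ q0.+1; set A' := a' ^+ q0.+1.
  have EA : A = a ^+ q0.+1 by []; have EA' : A' = a' ^+ q0.+1 by [].
  clearbody A A'.
  have A0 : A != 0 by rewrite EA; apply: A_neq0.
  have := H (c - u * A); have := H (c - (u + 1) * A).
  rewrite !adjF0 a0 /=.
  rewrite (_ : c - (c - u * A) = u * A); last by ring.
  rewrite (_ : c - (c - (u + 1) * A) = (u + 1) * A); last by ring.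
  rewrite -EA -EA' !eqxx orbT /= => /andP [a'0 h2] /andP [_ h1].
  have key : (c' - (c - (u + 1) * A)) - (c' - (c - u * A)) = A by ring.
  have aa : A' = A -> a' = a by rewrite EA EA'; apply: inj1.
  rewrite (vK_eq E').
  move: h1 h2 => /orP [] /eqP h1 /orP [] /eqP h2; rewrite h1 h2 in key.
  - by move: A0; rewrite -key subrr eqxx.
  - have eA : A' = A by rewrite -key; ring.
    left; rewrite (aa eA); congr vK.
    by apply/eqP; rewrite -subr_eq0 (_ : c' - c = (c' - (c - u * A)) - u * A); [rewrite h1 eA subrr | ring].
  - have eA : A' = A by rewrite -[A]oppE -key; ring.
    right; rewrite (aa eA); congr vK.
    by apply/eqP; rewrite -subr_eq0 (_ : c' - (c + A) = (c' - (c - u * A)) - (u + 1) * A); [rewrite h1 eA subrr | ring].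
  - by move: A0; rewrite -key subrr eqxx.
have bad a c : a != 0 -> t (vK a c) != vK a (c + a ^+ q0.+1).
  move=> a0; apply/eqP => Et.
  set b := a * eta.
  have b0 : b != 0 by rewrite mulf_neq0.
  have ab : a - b != 0.
    by rewrite /b -{1}(mulr1 a) -mulrBr mulf_neq0 // subr_eq0 eq_sym.
  clearbody b.
  set T := (a - b) ^+ q0.+1; set A := a ^+ q0.+1; set B := b ^+ q0.+1.
  have ET : T = (a - b) ^+ q0.+1 by []; have EA : A = a ^+ q0.+1 by [].
  have EB : B = b ^+ q0.+1 by [].
  set d := c - u * T + b ^+ q0 * b - a ^+ q0 * b.
  have Ed : d = c - u * T + b ^+ q0 * b - a ^+ q0 * b by [].
  clearbody T A B d.
  have adj1 : adjF a c b d.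
    by rewrite /adjF ab /=; apply/orP; left; apply/eqP; rewrite Ed -ET; ring.
  rewrite -Gadj_vK -Ht Et in adj1.
  have A0 : A != 0 by rewrite EA; apply: A_neq0.
  have [Ety|Ety] := shape b d b0; rewrite Ety Gadj_vK /adjF ab /= -ET -EA -?EB in adj1.
    rewrite (_ : c + A - d + b ^+ q0 * b - a ^+ q0 * b = u * T + A) in adj1; last by rewrite Ed; ring.
    rewrite mulrDl mul1r in adj1.
    case/orP: adj1 => /eqP h.
      by move: h A0; rewrite -{2}[u * T]addr0 => /addrI ->; rewrite eqxx.
    move: h => /addrI; rewrite EA ET => /inj1 /eqP; rewrite -subr_eq0 (_ : a - (a - b) = b); last by ring.
    by rewrite (negbTE b0).
  rewrite (_ : c + A - (d + B) + b ^+ q0 * b - a ^+ q0 * b = u * T + (A - B)) in adj1; last by rewrite Ed; ring.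
  rewrite mulrDl mul1r in adj1.
  case/orP: adj1 => /eqP h.
    move: h; rewrite -{2}[u * T]addr0 => /addrI /eqP; rewrite subr_eq0 => /eqP.
    rewrite EA EB => /inj1 eab.
    by move: ab; rewrite eab subrr eqxx.
  move: h => /addrI h'.
  have eab : a ^+ q0 * b = a * b ^+ q0.
    apply: (ch2 (K := A - B - T) (P := b * b ^+ q0 - a * b ^+ q0)).
      rewrite EA EB ET !exprS frob frobN; ring.
    by rewrite h' subrr.
  move: ab; rewrite (inj2 a0 b0 eab) subrr eqxx //.
move=> x; have [a [c E]] := Kcoord x; rewrite (vK_eq E).
have [->|a0] := eqVneq a 0; first exact: Hz.
by case: (shape a c a0) => // Et; move: (bad a c a0); rewrite Et eqxx.
Qed.

Hypothesis Hu : u * (eta + eta ^+ q0) = 1 + eta ^+ q0.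

Lemma eta_q : eta + eta ^+ q0 != 0.
Proof.
apply/negP => /eqP h.
have : eta ^+ q0 * 1 = eta * 1 ^+ q0.
  by rewrite expr1n !mulr1; apply: (ch2 (K := eta + eta ^+ q0) (P := - eta)) => //; ring.
by move/(inj2 eta0 (oner_neq0 F)) => /eqP; rewrite (negbTE eta1).
Qed.

Lemma eta_q1 : eta ^+ q0.+1 != 1.
Proof.
apply/negP => /eqP h.
have : eta ^+ q0.+1 = 1 ^+ q0.+1 by rewrite h expr1n.
by move/inj1/eqP; rewrite (negbTE eta1).
Qed.

Lemma E1 a : a != 0 ->
  adjF a (u * a ^+ q0.+1) (a * eta) (u * a ^+ q0.+1 * eta ^+ q0.+1).
Proof.
move=> a0; rewrite /adjF; apply/andP; split.
  by rewrite -{1}(mulr1 a) -mulrBr mulf_neq0 // subr_eq0 eq_sym.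
apply/orP; right; apply/eqP.
rewrite !exprS frob frobN !exprMn.
apply: (ch2 (K := a * a ^+ q0 * (u * (eta + eta ^+ q0) - (1 + eta ^+ q0)))
            (P := - a * a ^+ q0 * eta * eta ^+ q0 * u + a * a ^+ q0 * eta ^+ q0)).
  ring.
by rewrite Hu subrr mulr0.
Qed.

Lemma E2 a : a != 0 ->
  adjF a ((u + 1) * a ^+ q0.+1) (a * eta) ((u + 1) * a ^+ q0.+1 * eta ^+ q0.+1) = false.
Proof.
move=> a0; rewrite /adjF; apply/negbTE; rewrite negb_and; apply/orP; right.
rewrite negb_or; apply/andP; split.
  rewrite !exprS frob frobN !exprMn.
  apply: (ch2ne (K := a * a ^+ q0 * (eta + eta ^+ q0) + a * a ^+ q0 * (u * (eta + eta ^+ q0) - (1 + eta ^+ q0)))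
            (P := a * a ^+ q0 - a * a ^+ q0 * eta - a * a ^+ q0 * eta * eta ^+ q0 * u)).
    ring.
  by rewrite Hu subrr mulr0 addr0 !mulf_neq0 ?expf_neq0 ?eta_q.
rewrite !exprS frob frobN !exprMn.
apply: (ch2ne (K := a * a ^+ q0 * (eta * eta ^+ q0 + 1) + a * a ^+ q0 * (u * (eta + eta ^+ q0) - (1 + eta ^+ q0)))
          (P := - a * a ^+ q0 * eta * eta ^+ q0 - a * a ^+ q0 * eta * eta ^+ q0 * u + a * a ^+ q0 * eta ^+ q0)).
  ring.
rewrite Hu subrr mulr0 addr0 !mulf_neq0 ?expf_neq0 //.
apply/negP => /eqP h; move: eta_q1; rewrite exprS.
suff -> : eta * eta ^+ q0 = 1 by rewrite eqxx.
by apply: (ch2 (K := eta * eta ^+ q0 + 1) (P := - 1)) => //; ring.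
Qed.

Lemma part2 (alpha : {perm V}) :
  (forall x y, Gadj F q0 u (alpha x) (alpha y) = Gadj F q0 u x y) ->
  (forall l (l0 : l != 0) x, alpha (cperm l0 x) = cperm l0 (alpha x)) ->
  (forall x, alpha (alpha x) = x) ->
  forall x, Gadj F q0 u x (vK 0 0) -> alpha x = x.
Proof.
move=> Ha Hc Hinv.
have f0 : alpha (vK 0 0) = vK 0 0.
  have c0 : cperm eta0 (vK 0 0) = vK 0 0.
    by apply: vK_eq; rewrite (cpermE eta0 (x := vK 0 0) (mkKE 0 0)) !mul0r.
  have [a [c E]] := Kcoord (alpha (vK 0 0)).
  have Ec := Hc _ eta0 (vK 0 0); rewrite c0 in Ec.
  have := cpermE eta0 E; rewrite -Ec E => /Phi_inj [Ea Ecc].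
  have : a * (eta - 1) = 0 by rewrite mulrBr mulr1 {1}Ea divfK // subrr.
  move/eqP; rewrite mulf_eq0 subr_eq0 (negbTE eta1) orbF => /eqP a0.
  have e0 : eta ^+ q0.+1 != 0 by rewrite expf_neq0.
  have : c * (eta ^+ q0.+1 - 1) = 0 by rewrite mulrBr mulr1 {1}Ecc divfK // subrr.
  move/eqP; rewrite mulf_eq0 subr_eq0 (negbTE eta_q1) orbF => /eqP cz.
  by rewrite (vK_eq E) a0 cz.
have swap (p : V) (a c a' c' : F) : GLval (val p) = Phi F q0 a c -> a != 0 -> c = u * a ^+ q0.+1 ->
    GLval (val (alpha p)) = Phi F q0 a' c' -> a' != 0 -> c' = (u + 1) * a' ^+ q0.+1 -> False.
  move=> E a0 hc E' a'0 hc'.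
  have ei0 : eta^-1 != 0 by rewrite invr_eq0.
  have Ep2 := cpermE ei0 E.
  have Eap2 : GLval (val (alpha (cperm ei0 p))) = Phi F q0 (a' / eta^-1) (c' / (eta^-1) ^+ q0.+1).
    by rewrite Hc; apply: cpermE.
  have := Ha p (cperm ei0 p).
  rewrite (Gadj_E E' Eap2) (Gadj_E E Ep2) !exprVn !invrK hc hc' E1 // E2 //.
move=> x Sx.
have [a [c E]] := Kcoord x; have [a' [c' E']] := Kcoord (alpha x).
have Sx' : Gadj F q0 u (alpha x) (vK 0 0) by rewrite -f0 Ha.
rewrite (Gadj_E (y := vK 0 0) E (mkKE 0 0)) adjF0 !subr0 in Sx.
rewrite (Gadj_E (y := vK 0 0) E' (mkKE 0 0)) adjF0 !subr0 in Sx'.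
have same (v : F) : c = v * a ^+ q0.+1 -> c' = v * a' ^+ q0.+1 -> alpha x = x.
  move=> hc hc'.
  case/andP: Sx => a0 _; case/andP: Sx' => a'0 _.
  have l0 : a / a' != 0 by rewrite mulf_neq0 ?invr_eq0.
  have Ecx : GLval (val (cperm l0 x)) = Phi F q0 a' c'.
    rewrite (cpermE l0 E) hc hc'; congr Phi; rewrite ?expr_div_n; field.
      by rewrite a0 a'0.
    by rewrite !expf_neq0.
  have ax : alpha x = cperm l0 x by rewrite (vK_eq E') (vK_eq Ecx).
  have Exx := Hinv x; rewrite {1}ax Hc ax in Exx.
  have := cpermE l0 Ecx; rewrite Exx E => /Phi_inj [Ea _].
  have h : a * a = a' * a'.
    have -> : a * a = a' / (a / a') * a by rewrite -Ea.
    by field; rewrite a0 a'0.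
  have : (a - a') ^+ 2 = 0.
    rewrite (_ : (a - a') ^+ 2 = (a * a - a' * a') + 2%:R * (a' * a' - a * a')); last by ring.
    by rewrite F2 mul0r addr0 h subrr.
  move/eqP; rewrite expf_eq0 /= subr_eq0 => /eqP aa.
  by rewrite (vK_eq E') (vK_eq E) hc hc' aa.
case/andP: (Sx) => a0 /orP [] /eqP hc; case/andP: (Sx') => a'0 /orP [] /eqP hc'.
- exact: (same u).
- by case: (swap x a c a' c').
- have Ex : GLval (val (alpha (alpha x))) = Phi F q0 a c by rewrite Hinv.
  by case: (swap (alpha x) a' c' a c).
- exact: (same (u + 1)).
Qed.

Hypothesis surj : forall z : F, exists b : F, b ^+ q0.+1 = z.

Lemma comm_Z z : mkK 0 z \in [~: Kset F q0, Kset F q0]%g.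
Proof.
have en : eta ^+ q0 - eta != 0 by rewrite -[eta in _ - eta]oppE opprK addrC eta_q.
have [b Eb] := surj (z / (eta ^+ q0 - eta)).
suff -> : mkK 0 z = [~ mkK (b * eta) 0, mkK b 0]%g by apply: mem_commg; apply: mkK_in.
apply: GL_eq; rewrite (commPhi (mkKE _ _) (mkKE _ _)) mkKE; congr Phi.
rewrite (_ : (b * eta) ^+ q0 * b - b ^+ q0 * (b * eta) = b ^+ q0.+1 * (eta ^+ q0 - eta)).
  by rewrite Eb divfK.
by rewrite exprMn exprS; ring.
Qed.

Lemma comm_cent (k m : {'GL_3[F]}) : k \in [~: Kset F q0, Kset F q0]%g -> m \in Kset F q0 ->
  commute k m.
Proof.
move=> Hk Hm.
have sub : [~: Kset F q0, Kset F q0]%g \subset 'C(Kset F q0)%g.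
  rewrite gen_subG; apply/subsetP => _ /imset2P [x y Hx Hy ->].
  apply/centP => w Hw; rewrite /commute.
  move: Hx Hy Hw; rewrite !inE => /existsP [a /existsP [c /eqP Ex]] /existsP [b /existsP [d /eqP Ey]]
     /existsP [a' /existsP [c' /eqP Ew]].
  have Ec := commPhi Ex Ey.
  have z0 : (0 : F) ^+ q0 = 0 by rewrite expr0n gtn_eqF.
  apply: GL_eq; rewrite (GLmulE Ew Ec) (GLmulE Ec Ew) z0; congr Phi; ring.
by move/subsetP: sub => /(_ k Hk) /centP /(_ m Hm).
Qed.

Lemma AutG_E (s : {perm V}) : s \in AutG F q0 u -> forall x y, Gadj F q0 u (s x) (s y) = Gadj F q0 u x y.
Proof. by rewrite inE => /forallP H x y; have /forallP /(_ y) /eqP := H x. Qed.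

Lemma final :
  (let A := ('C_(AutG F q0 u)(rmulPerm F q0 [~: Kset F q0, Kset F q0]))%g in
   let Kp := rmulPerm F q0 (Kset F q0) in
   [/\ Kp \subset A,
       (#|A : Kp|%g <= 2)%N &
       forall s, s \in A :\: Kp ->
         (fun x => s x) @: OmegaV F q0 u = OmegaV F q0 (u + 1)%R /\
         (fun x => s x) @: OmegaV F q0 (u + 1)%R = OmegaV F q0 u])
  /\
  (forall alpha : {perm V},
     alpha \in AutG F q0 u -> #[alpha]%g = 2%N ->
     alpha \in ('C(conjPerm F q0 (Hset F q0)))%g ->
     forall x : V, x \in OmegaV F q0 u :|: OmegaV F q0 (u + 1)%R ->
       alpha x = x).
Proof.
split.
  move=> A Kp.
  have KpA : Kp \subset A.
    apply/subsetP => s; rewrite inE => /existsP [k /andP [Hk /forallP Hs]].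
    rewrite /A inE; apply/andP; split.
      rewrite inE; apply/forallP => x; apply/forallP => y.
      by rewrite /Gadj !(eqP (Hs _)) Gadj_rmul.
    apply/centP => r; rewrite inE => /existsP [z /andP [Hz /forallP Hr]].
    apply/permP => x; rewrite !permM; apply: val_inj.
    rewrite (eqP (Hs _)) (eqP (Hr _)) (eqP (Hr _)) (eqP (Hs _)) -!mulgA.
    by rewrite (comm_cent Hz Hk).
  have AKp : A \subset Kp.
    apply/subsetP => s; rewrite /A inE => /andP [sAut /centP sC].
    set k := val (s (vK 0 0)).
    have Hk : k \in Kset F q0 := valP _.
    have Hki := Kinv_in Hk.
    set t := (s * rperm Hki)%g.
    have Ht x y : Gadj F q0 u (t x) (t y) = Gadj F q0 u x y.
      by rewrite !permM rperm_aut (AutG_E sAut).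
    have Hz z : t (vK 0 z) = vK 0 z.
      have Hrz : rperm (mkK_in 0 z) \in rmulPerm F q0 [~: Kset F q0, Kset F q0]%g.
        rewrite inE; apply/existsP; exists (mkK 0 z); rewrite comm_Z /=.
        by apply/forallP => x; rewrite rpermE.
      have e0 : vK 0 z = rperm (mkK_in 0 z) (vK 0 0).
        by apply: val_inj; rewrite rpermE vK00 mul1g.
      have cs := sC _ Hrz.
      have : s (rperm (mkK_in 0 z) (vK 0 0)) = rperm (mkK_in 0 z) (s (vK 0 0)).
        by rewrite -!permM cs.
      rewrite -e0 /t permM => ->; apply: val_inj.
      rewrite !rpermE -/k -(comm_cent (comm_Z z) Hk) mulgK.
      by [].
    have tx := fix_all Ht Hz.
    rewrite inE; apply/existsP; exists k; rewrite Hk /=; apply/forallP => x.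
    have := tx x; rewrite /t permM => /(congr1 val); rewrite rpermE => <-.
    by rewrite mulgKV.
  have eq : A = Kp by apply/eqP; rewrite eqEsubset AKp KpA.
  split => //.
    rewrite eq /indexg.
    have : rcosets Kp Kp \subset [set Kp].
      apply/subsetP => _ /imsetP [s Hs ->]; rewrite inE; apply/eqP.
      apply/eqP; rewrite eqEcard /rcoset card_imset; last exact: mulIg.
      rewrite leqnn andbT.
      apply/subsetP => _ /imsetP [r Hr ->].
      move: Hs Hr; rewrite !inE => /existsP [k /andP [Hk /forallP Hs]] /existsP [k' /andP [Hk' /forallP Hr]].
      apply/existsP; exists (k' * k)%g; rewrite Kmul_in //=; apply/forallP => x.
      by rewrite permM (eqP (Hs _)) (eqP (Hr _)) mulgA.
    by move/subset_leq_card; rewrite cards1 => /leq_trans; apply.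
  by move=> s; rewrite eq setDv inE.
move=> alpha aAut ord2 aC.
have Ha := AutG_E aAut.
have Hc l (l0 : l != 0) x : alpha (cperm l0 x) = cperm l0 (alpha x).
  have := centP aC _ (cperm_in l0); move/permP/(_ x); rewrite !permM => ->.
  by [].
have Hinv x : alpha (alpha x) = x.
  have := expg_order alpha; rewrite ord2.
  by rewrite expgS expg1 => /permP /(_ x); rewrite permM perm1.
move=> x Sx; apply: part2 => //.
by rewrite /Gadj vK00 invg1 mulg1; move: Sx; rewrite !inE.
Qed.

End Mat.

Lemma pow_inj (F : finFieldType) (N : nat) : (1 < #|F|.-1)%N -> coprime N #|F|.-1 ->
  forall x y : F, x ^+ N = y ^+ N -> x = y.
Proof.
move=> n1 cop x y E.
have N0 : (0 < N)%N.
  by case: N cop E => // cop; move: cop; rewrite /coprime gcd0n => /eqP h; move: n1; rewrite h.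
have cardS : #|F| = (#|F|.-1).+1 by move: n1; case: #|F|.
have unit z : z != 0 -> z ^+ #|F|.-1 = 1 :> F.
  move=> z0; apply: (mulfI z0); rewrite mulr1 -exprS -cardS; exact: expf_card.
have [x0|x0] := eqVneq x 0.
  by move: E; rewrite x0 expr0n gtn_eqF // => /esym/eqP; rewrite expf_eq0 N0 /= => /eqP.
have [y0|y0] := eqVneq y 0.
  by move: E; rewrite y0 expr0n gtn_eqF // => /eqP; rewrite expf_eq0 N0 /= => /eqP.
set w := x / y.
have w0 : w != 0 by rewrite mulf_neq0 ?invr_eq0.
have wN : w ^+ N = 1 by rewrite /w exprMn exprVn E divff // expf_neq0.
have [a _ Ha] := Bezoutl N (ltn_trans (isT : (0 < 1)%N) n1).
move: Ha; rewrite gcdnC; move: cop; rewrite /coprime => /eqP ->.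
case/dvdnP => k Ek.
have : w ^+ (1 + a * N) = 1 by rewrite Ek mulnC exprM unit // expr1n.
rewrite exprD expr1 mulnC exprM wN expr1n mulr1 /w => h.
by rewrite -(divfK y0 x) h mul1r.
Qed.

Lemma frob2 (F : finFieldType) (e : nat) : (2%:R : F) = 0 ->
  forall x y : F, (x + y) ^+ (2 ^ e) = x ^+ (2 ^ e) + y ^+ (2 ^ e).
Proof.
move=> F2 x y; elim: e => [|e IH]; first by rewrite !expr1.
rewrite expnSr !exprM IH.
apply/eqP; rewrite -subr_eq0.
rewrite (_ : (x ^+ (2 ^ e) + y ^+ (2 ^ e)) ^+ 2 - (x ^+ (2 ^ e) ^+ 2 + y ^+ (2 ^ e) ^+ 2) =
   2%:R * (x ^+ (2 ^ e) * y ^+ (2 ^ e))); last by ring.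
by rewrite F2 mul0r.
Qed.

Local Close Scope ring_scope.
Unset Implicit Arguments.

Theorem lemma6p5 (F : finFieldType) (f q0 : nat) (u : F) :
  4 <= f -> #|F| = 2 ^ f ->
  (exists e : nat, q0 = 2 ^ e) -> q0 < 2 ^ f ->
  coprime (2 ^ f - 1) (q0 ^ 2 - 1) ->
  inU F q0 u ->
  (let A := ('C_(AutG F q0 u)(rmulPerm F q0 [~: Kset F q0, Kset F q0]))%g in
   let Kp := rmulPerm F q0 (Kset F q0) in
   [/\ Kp \subset A,
       #|A : Kp|%g <= 2 &
       forall s, s \in A :\: Kp ->
         (fun x => s x) @: OmegaV F q0 u = OmegaV F q0 (u + 1)%R /\
         (fun x => s x) @: OmegaV F q0 (u + 1)%R = OmegaV F q0 u])
  /\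
  (forall alpha : {perm Kvert F q0},
     alpha \in AutG F q0 u -> #[alpha]%g = 2 ->
     alpha \in ('C(conjPerm F q0 (Hset F q0)))%g ->
     forall x : Kvert F q0, x \in OmegaV F q0 u :|: OmegaV F q0 (u + 1)%R ->
       alpha x = x).
Proof.
move=> f4 cardF [e q0e] q0lt cop HU.
have F2 : (2%:R : F)%R = 0%R.
  by apply: (pcharf0 (p := 2)); apply: (card_finPcharP cardF).
have n1 : 1 < #|F|.-1.
  rewrite cardF; have : 2 ^ 4 <= 2 ^ f by rewrite leq_exp2l.
  by case: (2 ^ f) => [|[|[|m]]].
have ncop : coprime (q0.-1) #|F|.-1 && coprime (q0.+1) #|F|.-1.
  move: cop; rewrite -[in X in coprime _ X](exp1n 2) subn_sqr coprimeMr => /andP [h1 h2].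
  by rewrite cardF -!subn1 -(addn1 q0) (coprime_sym (q0 - 1)) (coprime_sym (q0 + 1)) h1 h2.

case/andP: ncop => copm copp.
have q0pos : 0 < q0 by rewrite q0e expn_gt0.
have frob : forall x y : F, ((x + y) ^+ q0 = x ^+ q0 + y ^+ q0)%R by rewrite q0e; apply: frob2.
have inj1 : forall x y : F, (x ^+ q0.+1)%R = (y ^+ q0.+1)%R -> x = y by apply: pow_inj.
have inj2 : forall a b : F, a != 0%R -> b != 0%R -> (a ^+ q0 * b = a * b ^+ q0)%R -> a = b.
  move=> a b a0 b0; rewrite -(prednK q0pos) !exprS => h.
  apply: (pow_inj n1 copm); apply: (mulfI b0); apply: (mulfI a0).
  by rewrite -h; ring.
have surj : forall z : F, exists b : F, (b ^+ q0.+1)%R = z.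
  have [g _ gK] := injF_bij inj1.
  by move=> z; exists (g z); rewrite (gK z).
case: HU => [[eta [Hprim Hueq]] _].
have eta0 : eta != 0%R.
  apply/negP => /eqP e0; have := prim_expr_order Hprim; rewrite e0 expr0n.
  by rewrite gtn_eqF ?(ltn_trans _ n1) //= => /eqP; rewrite eq_sym oner_eq0.
have eta1 : eta != 1%R.
  apply/negP => /eqP e1; have := prim_order_dvd Hprim 1; rewrite e1 expr1 eqxx.
  by move/dvdn_leq => /(_ isT); rewrite leqNgt n1.
have Hu : (u * (eta + eta ^+ q0) = 1 + eta ^+ q0)%R.
  by rewrite Hueq divfK // (eta_q F2 inj2 eta0 eta1).
exact: (final q0pos frob F2 inj1 inj2 eta0 eta1 Hu surj).
Qed.
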